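(* In the setting of the context, suppose that $R=S$ and that $A$ is not abelian. If $v\in C_V(A)$ satisfies $[v\mu,a]-vh_a=0$ for all $a\in A$, then $v=0$.
   Context: Conventions: $G$ acts on $V$ on the right, $[v,g]=-v+vg$; $[X,Y]$ is the subgroup generated by commutators, $[X,Y,Z]=[[X,Y],Z]$; $A^\#=A\setminus\{1\}$. Setting: $G=\langle A,B\rangle$ is an abstract rank one group with unipotent subgroups $A,B$ (distinct nilpotent; for each $a\in A^\#$ some $b(a)\in B^\#$ with $B^a=A^{b(a)}$, and vice versa). $\mu_a=b(a^{-1})ab(a)^{-1}$, $H=\langle\mu_a\mu_c:a,c\in A^\#\rangle$. $V$ is a $\mathbb{Z}G$-module with $[V,A,A,A]=0$, $[V,G,G,G]\neq0$, $[V,G]=V$, $C_V(G)=0$. $A_0=C_A([V,A])\cap C_A(V/C_V(A))\neq1$. Fix $e\in A_0^\#$ (with $e=a^2$ for some $a\in A$ if $V$ has exponent 2 and $A$ is non-abelian), $\mu=\mu_{e^{-1}}$, $h_a=\mu\mu_a$ for $a\in A^\#$, $h_1=0$; $\rho(h)$ = restriction of $h\in H$ to $C_V(A)$, $\rho(h_1)=0$. $R$, $S$ are the subrings of $\mathrm{End}(C_V(A))$ generated by $J=\{\rho(h_a):a\in A_0\}$, resp. by $\rho(H)$. *)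

(* Defs.v *)
From HB Require Import structures.
From mathcomp Require Import all_boot all_algebra.
Set Implicit Arguments. Unset Strict Implicit. Unset Printing Implicit Defensive.
Import GRing.Theory.

Local Open Scope group_scope.

Inductive ggen (gT : groupType) (S : gT -> Prop) : gT -> Prop :=
| ggen_base x : S x -> ggen S x
| ggen_one : ggen S 1
| ggen_mul x y : ggen S x -> ggen S y -> ggen S (x * y)
| ggen_inv x : ggen S x -> ggen S x^-1.

Definition is_subgroup (gT : groupType) (X : gT -> Prop) :=
  [/\ X 1, (forall x y, X x -> X y -> X (x * y)) & (forall x, X x -> X x^-1)].

Definition gcomm (gT : groupType) (X Y : gT -> Prop) : gT -> Prop :=
  ggen (fun z => exists x y, [/\ X x, Y y & z = [~ x, y]]).

Fixpoint lcs (gT : groupType) (X : gT -> Prop) (n : nat) : gT -> Prop :=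
  match n with 0 => X | n'.+1 => gcomm (lcs X n') X end.

Definition ab_nilpotent (gT : groupType) (X : gT -> Prop) :=
  exists n, forall x, lcs X n x -> x = 1.

Definition ab_abelian (gT : groupType) (X : gT -> Prop) :=
  forall x y, X x -> X y -> x * y = y * x.

Definition conj_set (gT : groupType) (X : gT -> Prop) (g : gT) : gT -> Prop :=
  fun z => exists2 x, X x & z = x ^ g.

Definition set_eq (T : Type) (X Y : T -> Prop) := forall x, X x <-> Y x.

(* gT = <A,B> is an abstract rank one group with unipotent subgroups A, B;
   b is the chosen map a |-> b(a) on A^#. *)
Definition abstract_rank_one (gT : groupType) (A B : gT -> Prop)
    (b : gT -> gT) :=
  [/\ is_subgroup A /\ is_subgroup B,
      ab_nilpotent A /\ ab_nilpotent B,
      ~ set_eq A B /\ (forall x, ggen (fun z => A z \/ B z) x),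
      (forall a, A a -> a <> 1 ->
         [/\ B (b a), b a <> 1 & set_eq (conj_set B a) (conj_set A (b a))]) &
      (forall y, B y -> y <> 1 ->
         exists a, [/\ A a, a <> 1 & set_eq (conj_set A y) (conj_set B a)])].

Definition mu_of (gT : groupType) (b : gT -> gT) (a : gT) : gT :=
  b a^-1 * a * (b a)^-1.

Definition Hgrp (gT : groupType) (A : gT -> Prop) (b : gT -> gT) : gT -> Prop :=
  ggen (fun h => exists a c,
          [/\ A a, a <> 1, A c, c <> 1 & h = mu_of b a * mu_of b c]).

Local Close Scope group_scope.
Local Open Scope ring_scope.

Definition right_module (gT : groupType) (V : zmodType) (act : V -> gT -> V) :=
  [/\ (forall v, act v 1%g = v),
      (forall v g h, act v (g * h)%g = act (act v g) h) &
      (forall u v g, act (u + v) g = act u g + act v g)].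

Definition vcomm (gT : groupType) (V : zmodType) (act : V -> gT -> V) v g : V :=
  - v + act v g.

Inductive zgen (V : zmodType) (S : V -> Prop) : V -> Prop :=
| zgen_base v : S v -> zgen S v
| zgen_zero : zgen S 0
| zgen_add u v : zgen S u -> zgen S v -> zgen S (u + v)
| zgen_opp v : zgen S v -> zgen S (- v).

Definition mcomm (gT : groupType) (V : zmodType) (act : V -> gT -> V)
    (X : V -> Prop) (Y : gT -> Prop) : V -> Prop :=
  zgen (fun w => exists x y, [/\ X x, Y y & w = vcomm act x y]).

Definition fixV (gT : groupType) (V : zmodType) (act : V -> gT -> V)
    (Y : gT -> Prop) : V -> Prop :=
  fun v => forall y, Y y -> act v y = v.

(* A_0 = C_A([V,A]) \cap C_A(V/C_V(A)) *)
Definition A0 (gT : groupType) (V : zmodType) (act : V -> gT -> V)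
    (A : gT -> Prop) : gT -> Prop :=
  fun a => [/\ A a,
     (forall x, mcomm act (fun _ => True) A x -> act x a = x) &
     (forall v, fixV act A (vcomm act v a))].

(* v |-> v h_a, with h_a = mu mu_a (a in A^#), h_1 = 0, mu = mu_{e^-1} *)
Definition hmap (gT : groupType) (V : zmodType) (act : V -> gT -> V)
    (b : gT -> gT) (e a : gT) : V -> V :=
  fun v => if a == 1%g then 0 else act v (mu_of b e^-1 * mu_of b a)%g.

(* Subring (with 1) of End(C) generated by a set J of maps; an element of
   End(C) is represented by any map V -> V agreeing with it on C. *)
Inductive ringgen (V : zmodType) (C : V -> Prop) (J : (V -> V) -> Prop)
  : (V -> V) -> Prop :=
| rg_gen f g : J g -> (forall v, C v -> f v = g v) -> ringgen C J f
| rg_one f : (forall v, C v -> f v = v) -> ringgen C J f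
| rg_zero f : (forall v, C v -> f v = 0) -> ringgen C J f
| rg_add f g h : ringgen C J f -> ringgen C J g ->
    (forall v, C v -> h v = f v + g v) -> ringgen C J h
| rg_opp f h : ringgen C J f ->
    (forall v, C v -> h v = - f v) -> ringgen C J h
| rg_mul f g h : ringgen C J f -> ringgen C J g ->
    (forall v, C v -> h v = g (f v)) -> ringgen C J h.

Definition ringR (gT : groupType) (V : zmodType) (act : V -> gT -> V)
    (A : gT -> Prop) (b : gT -> gT) (e : gT) : (V -> V) -> Prop :=
  ringgen (fixV act A) (fun f => exists2 a, A0 act A a & f = hmap act b e a).

Definition ringS (gT : groupType) (V : zmodType) (act : V -> gT -> V)
    (A : gT -> Prop) (b : gT -> gT) : (V -> V) -> Prop :=
  ringgen (fixV act A) (fun f => exists2 h, Hgrp A b h & f = (fun v => act v h)).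

(* Main.v *)
Require Import Defs.
From HB Require Import structures.
From mathcomp Require Import all_boot all_algebra.
From Stdlib Require Import Classical.

Import GRing.Theory.
Local Open Scope ring_scope.

Section Helpers.
Variables (gT : groupType) (A B : gT -> Prop) (b : gT -> gT).
Hypothesis sgA : is_subgroup A.
Hypothesis sgB : is_subgroup B.
Hypothesis ax : forall a, A a -> a <> 1%g ->
         [/\ B (b a), b a <> 1%g & set_eq (conj_set B a) (conj_set A (b a))].

Lemma Ainv {a} : A a -> A a^-1%g.
Proof. by case: sgA => _ _ hh; exact: hh. Qed.

Lemma neq1_inv {a : gT} : a <> 1%g -> a^-1%g <> 1%g.
Proof. by move=> h /eqP; rewrite invg_eq1 => /eqP. Qed.

Lemma Bconj y g : B y -> B g -> B (y ^ g)%g.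
Proof.
move=> By Bg; have [_ hM hV] := sgB; rewrite conjgE.
apply: (hM); first exact: hV.
exact: hM.
Qed.

Lemma invmu a : ((mu_of b a)^-1 = b a * a^-1 * (b a^-1)^-1)%g.
Proof. by rewrite /mu_of !invgM invgK mulgA. Qed.

Lemma swapBA {a y} : A a -> a <> 1%g -> B y -> A (y ^ (mu_of b a)^-1)%g.
Proof.
move=> Aa a1 By.
have [Bb _ _] := ax _ Aa a1.
have [Bb' _ eq'] := ax _ (Ainv Aa) (neq1_inv a1).
rewrite invmu !conjgM.
have : conj_set B a^-1 ((y ^ b a) ^ a^-1)%g by exists (y ^ b a)%g => //; exact: Bconj.
case/eq' => x Ax ->; by rewrite conjgK.
Qed.

Lemma swapAB {a y} : A a -> a <> 1%g -> A y -> B (y ^ (mu_of b a)^-1)%g.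
Proof.
move=> Aa a1 Ay.
have [Bb _ eq] := ax _ Aa a1.
have [Bb' _ _] := ax _ (Ainv Aa) (neq1_inv a1).
rewrite invmu !conjgM.
have : conj_set A (b a) (y ^ b a)%g by exists y.
case/eq => y2 By2 ->; rewrite conjgK; apply: Bconj => //.
by case: sgB => _ _ hh; apply: hh.
Qed.
End Helpers.
Arguments swapBA {gT A B b} sgA sgB ax {a y}.
Arguments swapAB {gT A B b} sgA sgB ax {a y}.
Arguments neq1_inv {gT a}.

Theorem proposition5p4 (gT : groupType) (A B : gT -> Prop) (b : gT -> gT)
    (V : zmodType) (act : V -> gT -> V) (e : gT) :
  abstract_rank_one A B b ->
  right_module act ->
  (* [V,A,A,A] = 0 *)
  (forall w, mcomm act (mcomm act (mcomm act (fun _ => True) A) A) A w -> w = 0) ->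
  (* [V,G,G,G] <> 0 *)
  (exists w, mcomm act (mcomm act (mcomm act (fun _ => True) (fun _ => True))
                 (fun _ => True)) (fun _ => True) w /\ w <> 0) ->
  (* [V,G] = V *)
  (forall v, mcomm act (fun _ => True) (fun _ => True) v) ->
  (* C_V(G) = 0 *)
  (forall v, fixV act (fun _ => True) v -> v = 0) ->
  (* A_0 <> 1 *)
  (exists a, A0 act A a /\ a <> 1%g) ->
  (* e in A_0^# *)
  A0 act A e -> e <> 1%g ->
  (* if V has exponent 2 and A is non-abelian then e is a square in A *)
  ((forall v : V, v + v = 0) -> ~ ab_abelian A ->
     exists2 a, A a & e = (a * a)%g) ->
  (* R = S *)
  (forall f, ringR act A b e f <-> ringS act A b f) ->
  (* A is not abelian *)
  ~ ab_abelian A ->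
  forall v, fixV act A v ->
    (forall a, A a ->
       vcomm act (act v (mu_of b e^-1)%g) a - hmap act b e a v = 0) ->
    v = 0.
Proof.
move=> [[sgA sgB] _ _ ax _] [act1 actM actD] _ _ _ _ _ [Ae _ _] e1 _ _ nab v fv hyp.
have Aei : A e^-1%g by case: sgA => _ _ hh; exact: hh.
have ei1 := neq1_inv e1.
set mu := mu_of b e^-1%g.
set u := act v mu.
set d := fun a => hmap act b e a v.
have act0 : forall g, act 0 g = 0.
  move=> g; have h := actD 0 0 g; rewrite addr0 in h.
  by apply: (addrI (act 0 g)); rewrite addr0 -h.
have dfix : forall x y, A x -> A y -> act (d x) y = d x.
  move=> x y Ax Ay; rewrite /d /hmap; case: eqP => [_|x1]; first exact: act0.
  set g := (mu_of b e^-1 * mu_of b x)%g.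
  rewrite -actM (conjgCV g y) actM.
  have Ay' : A (y ^ g^-1)%g.
    rewrite /g invgM conjgM; apply: (swapBA sgA sgB ax Aei ei1).
    exact: (swapAB sgA sgB ax Ax x1).
  by rewrite fv.
have hu : forall x, A x -> act u x = u + d x.
  move=> x Ax; have := hyp x Ax; rewrite /vcomm -/mu -/u => /eqP.
  by rewrite subr_eq0 => /eqP h; rewrite /d -h addrA addrN add0r.
have AM : forall x y, A x -> A y -> A (x * y)%g by case: sgA.
have AV : forall x, A x -> A x^-1%g by case: sgA.
have dM : forall x y, A x -> A y -> d (x * y)%g = d x + d y.
  move=> x y Ax Ay; have := hu _ (AM _ _ Ax Ay).
  rewrite actM hu // actD hu // dfix // => h.
  by apply: (addrI u); rewrite -h -addrA [d y + _]addrC.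
have d1 : d 1%g = 0 by rewrite /d /hmap eqxx.
have dV : forall x, A x -> d x^-1%g = - d x.
  by move=> x Ax; apply/eqP; rewrite -subr_eq0 opprK -(dM _ _ (AV _ Ax) Ax) mulVg d1.
have [x [y [Ax Ay nxy]]] : exists x y, [/\ A x, A y & (x * y <> y * x)%g].
  case: (classic (exists x y, [/\ A x, A y & (x * y <> y * x)%g])) => // hn.
  exfalso; apply: nab => x0 y0 Ax0 Ay0; apply: NNPP => h; apply: hn.
  by exists x0, y0.
set z := ((y * x)^-1 * (x * y))%g.
have Az : A z by apply: (AM); [apply: (AV); apply: (AM)|apply: (AM)].
have z1 : z <> 1%g.
  by move=> /eqP; rewrite mulg_eq1 eqg_inv => /eqP h; apply: nxy.
have dz : d z = 0.
  have Ayx := AM _ _ Ay Ax; have Axy := AM _ _ Ax Ay.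
  rewrite /z (dM _ _ (AV _ Ayx) Axy) (dV _ Ayx) (dM _ _ Ay Ax) (dM _ _ Ax Ay).
  by rewrite [d y + _]addrC addNr.
move: dz; rewrite /d /hmap; case: eqP => // _ h0.
by rewrite -[v]act1 -(mulgV (mu_of b e^-1 * mu_of b z)%g) actM h0 act0.
Qed.
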